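(* Let $\mathcal{F}$ be the class of planar graphs of maximum degree at most $4$, and let $G \in \mathcal{F}$ be a graph with $\chi_2(G) > 12$ that minimizes the pair $(|V(G)|, |E(G)|)$ (lexicographically) among all graphs of $\mathcal{F}$ with $\chi_2 > 12$. Then $G$ is $2$-connected.
   Context: All graphs are finite, without loops or parallel edges. A distance-$2$ coloring of a graph is an assignment of colors to its vertices such that any two distinct vertices at distance at most $2$ receive different colors; $\chi_2(G)$ is the minimum number of colors in a distance-$2$ coloring of $G$. *)

(* Defs.v *)
From Stdlib Require Import Reals.
From mathcomp Require Import all_boot.
Set Implicit Arguments. Unset Strict Implicit. Unset Printing Implicit Defensive.

Definition simple_graph (T : finType) (e : rel T) : Prop :=
  symmetric e /\ irreflexive e.

Definition deg (T : finType) (e : rel T) (x : T) : nat := #|[set y | e x y]|.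
Definition max_deg_le (T : finType) (e : rel T) (d : nat) : Prop :=
  forall x, deg e x <= d.

Definition num_edges (T : finType) (e : rel T) : nat :=
  (#|[set p : T * T | e p.1 p.2]|)./2.

(* Distance-2 colouring with k colours: distinct vertices at distance <= 2
   get distinct colours. chi_2(G) <= k iff such a colouring exists. *)
Definition dist2_coloring (T : finType) (e : rel T) (k : nat) (f : T -> 'I_k) : Prop :=
  forall x y, x != y -> (e x y || [exists z, e x z && e z y]) -> f x != f y.
Definition dist2_colorable (T : finType) (e : rel T) (k : nat) : Prop :=
  exists f : T -> 'I_k, dist2_coloring e f.

(* Vertices go to distinct points,
   each edge {x,y} is drawn as a continuous injective arc from p x to p y
   (parametrised by [0,1]) whose interior avoids all vertex points, and arcs of
   distinct edges meet only at vertex points (hence at common endpoints). *)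
Definition in01 (t : R) : Prop := Rle R0 t /\ Rle t R1.
Definition in01o (t : R) : Prop := Rlt R0 t /\ Rlt t R1.

Definition planar (T : finType) (e : rel T) : Prop :=
  exists (p : T -> prod R R) (c : T -> T -> R -> prod R R),
    injective p /\
    (forall x y, e x y ->
       (forall t, continuity_pt (fun s => fst (c x y s)) t) /\
       (forall t, continuity_pt (fun s => snd (c x y s)) t) /\
       c x y R0 = p x /\ c x y R1 = p y /\
       (forall s t, in01 s -> in01 t -> c x y s = c x y t -> s = t) /\
       (forall z t, in01o t -> c x y t <> p z)) /\
    (forall x y u v, e x y -> e u v -> ~ ((x = u /\ y = v) \/ (x = v /\ y = u)) ->
       forall s t, in01 s -> in01 t -> c x y s = c u v t ->
       exists w, c x y s = p w).

Definition in_F (T : finType) (e : rel T) : Prop :=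
  simple_graph e /\ planar e /\ max_deg_le e 4.

Definition lex_le (T : finType) (e : rel T) (T' : finType) (e' : rel T') : Prop :=
  #|T| < #|T'| \/ (#|T| = #|T'| /\ num_edges e <= num_edges e').

Definition connected_graph (T : finType) (e : rel T) : Prop :=
  forall x y : T, connect e x y.
Definition two_connected (T : finType) (e : rel T) : Prop :=
  2 < #|T| /\ connected_graph e /\
  forall v x y : T, x != v -> y != v ->
    connect [rel a b | [&& e a b, a != v & b != v]] x y.

(* Main.v *)
Require Import Defs.
From Stdlib Require Import Reals.
From mathcomp Require Import all_boot.
From mathcomp Require Import zify.
From Stdlib Require Import Classical.
Set Implicit Arguments. Unset Strict Implicit. Unset Printing Implicit Defensive.
Lemma perm_exists (K : finType) (a b : K) (S1 S2 : {set K}) :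
  a \notin S2 -> b \notin S1 -> #|S1| + #|S2| < #|K| ->
  exists g : K -> K, injective g /\ g a = b /\ forall c, c \in S2 -> g c \notin S1.
Proof.
move=> Ha Hb Hcard.
set P := a :: enum S2 ++ enum (~: (a |: S2)).
set Q := b :: enum (~: (b |: S1)) ++ enum S1.
have memP : forall c, c \in P.
  move=> c; rewrite inE mem_cat !mem_enum !inE.
  by case: (c == a); case: (c \in S2).
have memQ : forall c, c \in Q.
  move=> c; rewrite inE mem_cat !mem_enum !inE.
  by case: (c == b); case: (c \in S1).
have uP : uniq P.
  rewrite /P cons_uniq mem_cat !mem_enum !inE eqxx (negbTE Ha) /=.
  rewrite cat_uniq !enum_uniq /= andbT.
  apply/hasPn => c; rewrite !mem_enum !inE negb_or => /andP [_ H]; exact: H.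
have uQ : uniq Q.
  rewrite /Q cons_uniq mem_cat !mem_enum !inE eqxx (negbTE Hb) /=.
  rewrite cat_uniq !enum_uniq /= andbT.
  apply/hasPn => c; rewrite !mem_enum !inE => H; rewrite negb_or H andbF //.
have sP : size P = #|K|.
  rewrite -(card_uniqP uP); apply: eq_card => c; by rewrite memP.
have sQ : size Q = #|K|.
  rewrite -(card_uniqP uQ); apply: eq_card => c; by rewrite memQ.
exists (fun c => nth b Q (index c P)); split; [|split].
- move=> c1 c2 /eqP; rewrite nth_uniq // ?sQ -?sP ?index_mem ?memP //.
  move=> /eqP E; by rewrite -(nth_index a (memP c1)) E nth_index.
- by rewrite /= eqxx.
- move=> c Hc.
  have Hca : c != a by apply: contraNneq Ha => <-.
  rewrite /P /= eq_sym (negbTE Hca) index_cat mem_enum Hc /=.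
  have Hi : index c (enum S2) < #|S2| by rewrite cardE index_mem mem_enum.
  have Hsz : #|S2| <= size (enum (~: (b |: S1))).
    rewrite -cardE.
    have := cardsC (b |: S1); rewrite cardsU1 Hb /=.
    move=> E; move: Hcard; rewrite -E; lia.
  rewrite nth_cat (leq_trans Hi Hsz).
  have : nth b (enum (~: (b |: S1))) (index c (enum S2)) \in enum (~: (b |: S1)).
    by apply: mem_nth; apply: leq_trans Hi Hsz.
  by rewrite mem_enum !inE negb_or => /andP [].
Qed.

Definition induced (T : finType) (e : rel T) (A : {set T}) : rel {x : T | x \in A} :=
  fun x y => e (val x) (val y).
Arguments induced {T} e A.

Lemma planar_induced (T : finType) (e : rel T) (A : {set T}) :
  planar e -> planar (induced e A).
Proof.
move=> [p [c [pinj [Hedge Hcross]]]].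
exists (fun x => p (val x)), (fun x y => c (val x) (val y)).
split; [by move=> x y /pinj /val_inj |split].
- move=> x y Hxy; have [H1 [H2 [H3 [H4 [H5 H6]]]]] := Hedge _ _ Hxy.
  do 5 (split => //). move=> z t Ht; exact: H6.
- move=> x y u v Hxy Huv Hne s t Hs Ht Hc.
  have Hne' : ~ ((val x = val u /\ val y = val v) \/ (val x = val v /\ val y = val u)).
    by case=> [[/val_inj ? /val_inj ?]|[/val_inj ? /val_inj ?]]; apply: Hne; [left|right].
  have [w Hw] := Hcross _ _ _ _ Hxy Huv Hne' s t Hs Ht Hc.
  have [H1 [H2 [H3 [H4 [H5 H6]]]]] := Hedge _ _ Hxy.
  case: Hs => [[Hs0|Hs0] [Hs1|Hs1]].
  + exfalso; apply: (H6 w s _ Hw); split; assumption.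
  + by exists y; rewrite Hs1.
  + by exists x; rewrite -Hs0.
  + by exists x; rewrite -Hs0.
Qed.

Lemma deg_induced (T : finType) (e : rel T) (A : {set T}) (x : {x : T | x \in A}) :
  deg (induced e A) x <= deg e (val x).
Proof.
rewrite /deg -(card_imset _ val_inj); apply: subset_leq_card.
by apply/subsetP => z /imsetP [y]; rewrite !inE => Hy ->.
Qed.

Lemma inF_induced (T : finType) (e : rel T) (A : {set T}) :
  in_F e -> in_F (induced e A).
Proof.
move=> [[Hsym Hirr] [Hpl Hdeg]]; split; [split|split].
- by move=> x y; rewrite /induced Hsym.
- by move=> x; rewrite /induced Hirr.
- exact: planar_induced.
- move=> x; exact: leq_trans (deg_induced e x) (Hdeg _).
Qed.

Lemma color_ext (T : finType) (e : rel T) (A : {set T}) :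
  dist2_colorable (induced e A) 12 ->
  exists F : T -> 'I_12, forall u w, u \in A -> w \in A -> u != w ->
    (e u w || [exists z in A, e u z && e z w]) -> F u != F w.
Proof.
case=> f Hf.
exists (fun z => if insub z is Some z' then f z' else ord0).
move=> u w Hu Hw Huw H.
rewrite (insubT (fun x => x \in A) Hu) (insubT (fun x => x \in A) Hw).
apply: Hf.
- by apply: contra Huw => /eqP /(congr1 val) /= ->.
- case/orP: H => [H|/existsP [z /andP [Hz H]]]; apply/orP; [by left|right].
  by apply/existsP; exists (Sub z Hz).
Qed.

Lemma min_col (T : finType) (e : rel T) (A : {set T}) :
  in_F e ->
  (forall (T' : finType) (e' : rel T'),
      in_F e' -> ~ dist2_colorable e' 12 -> lex_le e e') ->
  #|A| < #|T| -> dist2_colorable (induced e A) 12.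
Proof.
move=> HF Hmin HA; apply: NNPP => Hn.
have := Hmin _ _ (inF_induced A HF) Hn.
have E : #|{: {x : T | x \in A}}| = #|A| by rewrite card_sig; apply: eq_card.
rewrite /lex_le E; case=> [H|[H _]]; lia.
Qed.

Lemma lt_card_set (T : finType) (A : {set T}) y : y \notin A -> #|A| < #|T|.
Proof.
move=> Hy; rewrite -cardsT; apply: proper_card; rewrite properT.
by apply: contraNneq Hy => ->; rewrite inE.
Qed.

Theorem lemma1 (T : finType) (e : rel T) :
  in_F e -> ~ dist2_colorable e 12 ->
  (forall (T' : finType) (e' : rel T'),
      in_F e' -> ~ dist2_colorable e' 12 -> lex_le e e') ->
  two_connected e.
Proof.
move=> HF Hnc Hmin.
have [[Hsym Hirr] [_ Hdeg]] := HF.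
have Hsize : 2 < #|T|.
  case: (leqP #|T| 12) => H; last by lia.
  exfalso; apply: Hnc; exists (fun x => widen_ord H (enum_rank x)).
  move=> x y Hxy _; apply: contra Hxy => /eqP /(congr1 val) /= /val_inj.
  by move/enum_rank_inj => ->.
have Hcut : forall v x y, x != v -> y != v ->
    connect [rel a b | [&& e a b, a != v & b != v]] x y.
  move=> v x y Hxv Hyv; apply/negPn/negP => Hnxy.
  set ev := [rel a b | [&& e a b, a != v & b != v]] in Hnxy.
  set C := [set z | connect ev x z].
  have HvC : v \notin C.
    rewrite inE; apply/negP => Hc.
    have Hcl : closed ev [pred z | z != v].
      by move=> a b /and3P [_ Ha Hb]; rewrite !inE Ha Hb.
    by have := closed_connect Hcl Hc; rewrite !inE Hxv eqxx.
  have Hne : forall u, u \in C -> u != v by move=> u Hu; apply: contraNneq HvC => <-.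
  have Hcl : forall u w, u \in C -> e u w -> w != v -> w \in C.
    move=> u w Hu Huw Hwv; have Huv := Hne _ Hu; move: Hu; rewrite !inE => Hu.
    by apply: connect_trans Hu (connect1 _); rewrite /= Huw Huv Hwv.
  have HxC : x \in C by rewrite inE connect0.
  have HyC : y \notin C by rewrite inE.
  clearbody C.
  set A := v |: C.
  set B := ~: C.
  have HA : #|A| < #|T| by apply: (@lt_card_set _ _ y); rewrite !inE negb_or Hyv.
  have HB : #|B| < #|T| by apply: (@lt_card_set _ _ x); rewrite inE HxC.
  have [F1 HF1] := color_ext (min_col HF Hmin HA).
  have [F2 HF2] := color_ext (min_col HF Hmin HB).
  set N1 := [set u in C | e v u].
  set N2 := [set u | (u \notin C) && e v u].
  set S1 := F1 @: N1.
  set S2 := F2 @: N2.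
  have Hcard : #|S1| + #|S2| < #|'I_12|.
    rewrite card_ord.
    have h1 := leq_imset_card F1 N1.
    have h2 := leq_imset_card F2 N2.
    have h3 := cardsUI N1 N2.
    have h4 : N1 :&: N2 = set0.
      apply/setP => u; rewrite !inE.
      by case: (u \in C); rewrite ?andbF.
    have h5 : #|N1 :|: N2| <= deg e v.
      apply: subset_leq_card; apply/subsetP => u; rewrite !inE.
      by case/orP => /andP [].
    have h6 := Hdeg v.
    move: h3; rewrite h4 cards0; idtac.
    rewrite /S1 /S2; lia.
  have HvA : v \in A by rewrite !inE eqxx.
  have HvB : v \in B by rewrite inE.
  have Ha : F2 v \notin S2.
    apply/imsetP => [[u Hu E]]; move: Hu; rewrite inE => /andP [HuC Hvu].
    suff : F2 v != F2 u by rewrite E eqxx.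
    apply: HF2 => //.
    - by rewrite inE.
    - by apply: contraTneq Hvu => <-; rewrite Hirr.
    - by rewrite Hvu.
  have Hb : F1 v \notin S1.
    apply/imsetP => [[u Hu E]]; move: Hu; rewrite inE => /andP [HuC Hvu].
    suff : F1 v != F1 u by rewrite E eqxx.
    apply: HF1 => //.
    - by rewrite !inE HuC orbT.
    - by apply: contraTneq Hvu => <-; rewrite Hirr.
    - by rewrite Hvu.
  have [g [ginj [gab gS]]] := perm_exists Ha Hb Hcard.
  apply: Hnc; exists (fun z => if z \in C then F1 z else g (F2 z)).
  have fA : forall z, z \in A -> (if z \in C then F1 z else g (F2 z)) = F1 z.
    move=> z; rewrite !inE; case/orP => [/eqP ->|-> //].
    by rewrite (negbTE HvC) gab.
  have fB : forall z, z \in B -> (if z \in C then F1 z else g (F2 z)) = g (F2 z).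
    by move=> z; rewrite inE => /negbTE ->.
  have K1 : forall u z, u \in C -> e u z -> z \in A.
    move=> u z Hu Huz; rewrite !inE; case: (eqVneq z v) => //= Hzv.
    exact: Hcl Hu Huz Hzv.
  have K2 : forall z u, z \in C -> e z u -> u \notin C -> u = v.
    move=> z u Hz Hzu HuC; apply/eqP; apply: contraNT HuC => Huv.
    exact: Hcl Hz Hzu Huv.
  have Mixed : forall u w, u \in C -> w \notin C -> w != v ->
      (e u w || [exists z, e u z && e z w]) -> F1 u != g (F2 w).
    move=> u w Hu Hw Hwv.
    case/orP => [Huw|/existsP [z /andP [Huz Hzw]]].
      by move: (Hcl _ _ Hu Huw Hwv); rewrite (negbTE Hw).
    have Hz : z = v.
      move: (K1 _ _ Hu Huz); rewrite !inE; case/orP => [/eqP //|HzC].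
      by move: (K2 _ _ HzC Hzw Hw); move/eqP; rewrite (negbTE Hwv).
    subst z.
    have HuN : u \in N1 by rewrite inE Hu Hsym.
    have HwN : w \in N2 by rewrite inE Hw Hzw.
    apply: contraNneq (gS _ (imset_f F2 HwN)) => <-; exact: imset_f.
  move=> u w Huw Hd.
  have Hds : e w u || [exists z, e w z && e z u].
    case/orP: Hd => [H|/existsP [z /andP [H1 H2]]]; apply/orP; [by left; rewrite Hsym|right].
    by apply/existsP; exists z; rewrite (Hsym w z) H2 (Hsym z u) H1.
  have bothA : u \in A -> w \in A ->
      (if u \in C then F1 u else g (F2 u)) != (if w \in C then F1 w else g (F2 w)).
    move=> HuA HwA; rewrite !fA //; apply: HF1 => //.
    case/orP: Hd => [->//|/existsP [z /andP [H1 H2]]].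
    apply/orP; right; apply/existsP; exists z; rewrite H1 H2 !andbT.
    case: (boolP (u \in C)) => HuC; first exact: K1 HuC H1.
    have Huv : u = v by move: HuA; rewrite !inE (negbTE HuC) orbF => /eqP.
    have HwC : w \in C.
      move: HwA; rewrite !inE; case/orP => // /eqP Hwv.
      by move: Huw; rewrite Huv Hwv eqxx.
    by apply: K1 HwC _; rewrite Hsym.
  have bothB : u \in B -> w \in B ->
      (if u \in C then F1 u else g (F2 u)) != (if w \in C then F1 w else g (F2 w)).
    move=> HuB HwB; rewrite !fB // (inj_eq ginj); apply: HF2 => //.
    case/orP: Hd => [->//|/existsP [z /andP [H1 H2]]].
    apply/orP; right; apply/existsP; exists z; rewrite H1 H2 !andbT.
    rewrite inE; apply/negP => HzC.
    move: HuB HwB; rewrite !inE => HuC HwC.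
    have := K2 _ _ HzC H2 HwC; have := K2 _ _ HzC _ HuC.
    rewrite Hsym => /(_ H1) Hu Hw.
    by move: Huw; rewrite Hu Hw eqxx.
  case/orP: (orbN (u \in C)) => HuC; case/orP: (orbN (w \in C)) => HwC.
  - by apply: bothA; rewrite !inE ?HuC ?HwC orbT.
  - case: (eqVneq w v) => Hwv.
      by apply: bothA; rewrite !inE ?HuC ?Hwv ?eqxx ?orbT.
    by rewrite HuC (negbTE HwC); apply: Mixed.
  - case: (eqVneq u v) => Huv.
      by apply: bothA; rewrite !inE ?HwC ?Huv ?eqxx ?orbT.
    by rewrite HwC (negbTE HuC) eq_sym; apply: Mixed.
  - by apply: bothB; rewrite inE.
split => //; split => // x y.
case: (eqVneq x y) => [->|Hxy]; first exact: connect0.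
have [v Hv] : exists v, v \notin [set x; y].
  apply/existsP; apply: contraTT Hsize; rewrite negb_exists => /forallP H.
  rewrite -leqNgt; apply: (@leq_trans #|[set x; y]|); last by rewrite cards2; case: (x != y).
  rewrite -cardsT; apply: subset_leq_card; apply/subsetP => z _.
  by have := H z; rewrite negbK.
move: Hv; rewrite !inE negb_or => /andP [Hxv Hyv].
apply: connect_sub (Hcut v x y _ _); last by rewrite eq_sym.
  by move=> a b /= /and3P [Hab _ _]; apply: connect1.
by rewrite eq_sym.
Qed.
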